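(* Under the setting and conditions of the context, suppose in addition that the base procedure satisfies $\mathbb{E}[\mathrm{Regret}_T^{\mathrm{base}}(a,b)]=\Omega(T)$. Then $\mathbb{E}[\mathrm{Regret}_T^{\mathrm{DOMT}}(a,b)]=\mathbb{E}[\mathrm{Regret}_T^{\mathrm{base}}(a,b)]+\mathcal{O}(\sqrt T)$, and $\mathbb{E}[\mathrm{Regret}_T^{\mathrm{DOMT}}(a,b)]=\Theta(T)$.
   Context: Data model: states $Y_t\in\{0,1\}$; conditionally on the states and the past, $p_t\sim\mathrm{Uniform}[0,1]$ if $Y_t=0$ and $p_t\sim G$ if $Y_t=1$, where $G$ is a continuous strictly increasing CDF on $[0,1]$, $G(0)=0,G(1)=1$, and $G$ is $L$-Lipschitz for some $L\ge1$. A base procedure computes $\lambda_t^{\mathrm{base}}\in[0,1]$ from the virtual history $(p_s,\lambda_s^{\mathrm{base}},\delta_s^{\mathrm{base}})_{s\le t-1}$, virtual decisions $\delta_t^{\mathrm{base}}=\mathbf{1}\{p_t\le\lambda_t^{\mathrm{base}}\}$, and there is $\eta>0$ with $\liminf_T R_T^{\mathrm{base}}/T\ge\eta$ a.s., where $R_T^{\mathrm{base}}=\sum_{t\le T}\delta_t^{\mathrm{base}}$. DOMT with $\kappa\ge0$, $\alpha\in(0,1)$: $Z_t$ i.i.d. $\mathrm{Uniform}[0,1]$ independent of everything else, $\epsilon_t=\kappa\alpha/\sqrt t$, $\xi_t=\epsilon_tZ_t$, $\lambda_t=\min(1,\lambda_t^{\mathrm{base}}+\xi_t)$, actual decisions $\delta_t=\mathbf{1}\{p_t\le\lambda_t\}$;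 base state updated only with $\delta^{\mathrm{base}}$. For decisions $d_t$: $V_T=\sum_{t\le T}\mathbf{1}\{Y_t=0,d_t=1\}$, $M_T=\sum_{t\le T}\mathbf{1}\{Y_t=1,d_t=0\}$, $\mathrm{Regret}_T(a,b)=aV_T+bM_T$ with $a,b>0$; base uses $d_t=\delta_t^{\mathrm{base}}$, DOMT uses $d_t=\delta_t$. *)

(* Defs.v *)
From HB Require Import structures.
From mathcomp Require Import all_boot all_order all_algebra.
From mathcomp Require Import all_classical all_reals all_analysis.
Set Implicit Arguments. Unset Strict Implicit. Unset Printing Implicit Defensive.
Import Order.TTheory GRing.Theory Num.Theory.
Local Open Scope classical_set_scope.
Local Open Scope ring_scope.

(* Time is indexed by t = 1, 2, 3, ...; index 0 is unused. *)

Section DOMT.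
Context {R : realType} {d : measure_display} {Omega : measurableType d}.

Definition eps (kappa alpha : R) (t : nat) : R := kappa * alpha / Num.sqrt t%:R.

Definition lamD (kappa alpha : R) (lb Z : nat -> Omega -> R) (t : nat) (w : Omega) : R :=
  Num.min 1 (lb t w + eps kappa alpha t * Z t w).

Definition decB (p lb : nat -> Omega -> R) (t : nat) (w : Omega) : bool :=
  p t w <= lb t w.

Definition decD (kappa alpha : R) (p lb Z : nat -> Omega -> R) (t : nat) (w : Omega) : bool :=
  p t w <= lamD kappa alpha lb Z t w.

(* V_T: false discoveries (Y_t = 0, d_t = 1); Y_t = true encodes Y_t = 1 *)
Definition Vcount (Y : nat -> Omega -> bool) (dd : nat -> Omega -> bool) (T : nat) (w : Omega) : R :=
  \sum_(1 <= t < T.+1) ((~~ Y t w) && dd t w)%:R.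

Definition Mcount (Y : nat -> Omega -> bool) (dd : nat -> Omega -> bool) (T : nat) (w : Omega) : R :=
  \sum_(1 <= t < T.+1) (Y t w && ~~ dd t w)%:R.

Definition Regret (a b : R) (Y : nat -> Omega -> bool) (dd : nat -> Omega -> bool)
  (T : nat) (w : Omega) : R :=
  a * Vcount Y dd T w + b * Mcount Y dd T w.

Definition Rcount (dd : nat -> Omega -> bool) (T : nat) (w : Omega) : R :=
  \sum_(1 <= t < T.+1) (dd t w)%:R.

Definition Expect (P : probability Omega R) (f : Omega -> R) : R :=
  fine (\int[P]_w (f w)%:E)%E.

Definition states_past_gen (Y : nat -> Omega -> bool) (p : nat -> Omega -> R) (t : nat)
  : set (set Omega) :=
  [set A | (exists s, (1 <= s)%N /\ A = [set w | Y s w]) \/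
           (exists s (B : set R), (1 <= s < t)%N /\ measurable B /\ A = p s @^-1` B)].

(* generators of sigma(p_s, 1 <= s < t): the virtual history of the base procedure
   (lambda_s^base and delta_s^base are themselves functions of past p-values) *)
Definition past_p_gen (p : nat -> Omega -> R) (t : nat) : set (set Omega) :=
  [set A | exists s (B : set R), (1 <= s < t)%N /\ measurable B /\ A = p s @^-1` B].

Definition all_Yp_gen (Y : nat -> Omega -> bool) (p : nat -> Omega -> R) : set (set Omega) :=
  [set A | (exists s, (1 <= s)%N /\ A = [set w | Y s w]) \/
           (exists s (B : set R), (1 <= s)%N /\ measurable B /\ A = p s @^-1` B)].

End DOMT.

(* Main.v *)
Require Import Defs.
From HB Require Import structures.
From mathcomp Require Import all_boot all_order all_algebra.
From mathcomp Require Import all_classical all_reals all_analysis.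
From mathcomp Require Import measurable_realfun.
From mathcomp Require Import ring lra.
Import Order.TTheory GRing.Theory Num.Theory numFieldNormedType.Exports.
Local Open Scope classical_set_scope.
Local Open Scope ring_scope.



Definition Pr (R : realType) (d : measure_display) (Omega : measurableType d)
  (P : probability Omega R) (S : set Omega) : R := fine (P S).
Arguments Pr {R d Omega}.

Lemma PrE {R : realType} {d : measure_display} {Omega : measurableType d}
  {P : probability Omega R} {S : set Omega} : measurable S -> P S = (Pr P S)%:E.
Proof. move=> mS; rewrite /Pr fineK //; exact: fin_num_measure. Qed.

Lemma Pr_ge0 (R : realType) (d : measure_display) (Omega : measurableType d)
  (P : probability Omega R) (S : set Omega) : measurable S -> 0 <= Pr P S.
Proof. move=> mS; rewrite -lee_fin -PrE //; exact: measure_ge0. Qed.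

Lemma Pr_le1 (R : realType) (d : measure_display) (Omega : measurableType d)
  (P : probability Omega R) (S : set Omega) : measurable S -> Pr P S <= 1.
Proof. move=> mS; rewrite -lee_fin -PrE //; exact: probability_le1. Qed.

Lemma Pr_le (R : realType) (d : measure_display) (Omega : measurableType d)
  (P : probability Omega R) (S S' : set Omega) : measurable S -> measurable S' ->
  S `<=` S' -> Pr P S <= Pr P S'.
Proof. move=> mS mS' SS; rewrite -lee_fin -!PrE //; apply: le_measure => //; exact/mem_set. Qed.

Lemma Pr_U (R : realType) (d : measure_display) (Omega : measurableType d)
  (P : probability Omega R) (S S' : set Omega) : measurable S -> measurable S' ->
  Pr P (S `|` S') <= Pr P S + Pr P S'.
Proof. move=> mS mS'; rewrite -lee_fin EFinD -!PrE //; last exact: measurableU.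
  exact: measureU2. Qed.

Lemma Pr_disj (R : realType) (d : measure_display) (Omega : measurableType d)
  (P : probability Omega R) (S S' : set Omega) : measurable S -> measurable S' ->
  S `&` S' = set0 -> Pr P (S `|` S') = Pr P S + Pr P S'.
Proof. move=> mS mS' h; apply/EFin_inj; rewrite EFinD -!PrE //; last exact: measurableU.
  exact: measureU. Qed.

Lemma Pr_T (R : realType) (d : measure_display) (Omega : measurableType d)
  (P : probability Omega R) : Pr P setT = 1.
Proof. by rewrite /Pr probability_setT. Qed.

Lemma Expect_sum (R : realType) (d : measure_display) (Omega : measurableType d)
  (P : probability Omega R) (m n : nat) (a b : R) (S1 S2 : nat -> set Omega) :
  0 <= a -> 0 <= b -> (forall t, measurable (S1 t)) -> (forall t, measurable (S2 t)) ->
  Expect P (fun w => \sum_(m <= t < n) (a * \1_(S1 t) w + b * \1_(S2 t) w)) =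
  \sum_(m <= t < n) (a * Pr P (S1 t) + b * Pr P (S2 t)).
Proof.
move=> a0 b0 m1 m2; rewrite /Expect.
under eq_integral do rewrite -sumEFin.
rewrite ge0_integral_sum //; last 2 first.
- move=> t; apply/measurable_EFinP; apply: measurable_funD; apply: measurable_funM => //;
  exact: measurable_indic.
- move=> t x _; rewrite lee_fin; apply: addr_ge0; apply: mulr_ge0 => //.
rewrite (eq_bigr (fun t => (a * Pr P (S1 t) + b * Pr P (S2 t))%:E)); first by rewrite sumEFin.
move=> t _.
under eq_integral do rewrite EFinD.
rewrite ge0_integralD //; last 4 first.
- move=> x _; rewrite lee_fin; apply: mulr_ge0 => //.
- apply/measurable_EFinP; apply: measurable_funM => //; exact: measurable_indic.
- move=> x _; rewrite lee_fin; apply: mulr_ge0 => //.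
- apply/measurable_EFinP; apply: measurable_funM => //; exact: measurable_indic.
rewrite (integralZl_indic _ (fun _ => S1 t)) //; last by move=> /lt_le_trans /(_ a0); rewrite ltxx.
rewrite (integralZl_indic _ (fun _ => S2 t)) //; last by move=> /lt_le_trans /(_ b0); rewrite ltxx.
rewrite !integral_indic // !setIT.
by rewrite /Pr EFinD !EFinM !fineK //; apply: fin_num_measure.
Qed.



Lemma mle {R : realType} {d : measure_display} {Omega : measurableType d} (f g : Omega -> R) :
  measurable_fun setT f -> measurable_fun setT g -> measurable [set w | f w <= g w].
Proof.
move=> mf mg.
rewrite [X in measurable X](_ : _ = setT `&` (fun x => f x <= g x) @^-1` [set true]).
  exact: (measurable_fun_ler mf mg).
by apply/seteqP; split=> w /=; rewrite /preimage /=; [move=> ->|case].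
Qed.

Lemma mlt {R : realType} {d : measure_display} {Omega : measurableType d} (f g : Omega -> R) :
  measurable_fun setT f -> measurable_fun setT g -> measurable [set w | f w < g w].
Proof.
move=> mf mg.
rewrite [X in measurable X](_ : _ = setT `&` (fun x => f x < g x) @^-1` [set true]).
  exact: (measurable_fun_ltr mf mg).
by apply/seteqP; split=> w /=; rewrite /preimage /=; [move=> ->|case].
Qed.

Lemma Pr_split {R : realType} {d : measure_display} {Omega : measurableType d}
  (P : probability Omega R) (A : set Omega) (yb : Omega -> bool) :
  measurable A -> measurable [set w | yb w] ->
  Pr P (A `&` [set w | ~~ yb w]) + Pr P (A `&` [set w | yb w]) = Pr P A.
Proof.
move=> mA my.
have my' : measurable [set w | ~~ yb w].
  rewrite (_ : [set w | ~~ yb w] = ~` [set w | yb w]); first exact: measurableC.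
  by apply/seteqP; split=> w /=; case: (yb w).
rewrite -Pr_disj; [|exact: measurableI|exact: measurableI|].
  congr Pr; apply/seteqP; split=> w /=.
    by case=> [][].
  by move=> Aw; case: (yb w); [right|left].
by apply/seteqP; split=> w //= [][] _ + [] _; case: (yb w).
Qed.

Lemma cdf_int {R : realType} {d : measure_display} {Omega : measurableType d}
  (P : probability Omega R) (yb : Omega -> bool) (q : Omega -> R) (G : R -> R) (L : R)
  (Sg : set (set Omega)) :
  measurable [set w | yb w] -> measurable_fun setT q -> Sg `<=` measurable -> Sg setT ->
  G 1 = 1 -> 1 <= L ->
  (forall x y, 0 <= x <= 1 -> 0 <= y <= 1 -> `|G x - G y| <= L * `|x - y|) ->
  (forall A, Sg A -> forall x, 0 <= x <= 1 ->
     P (A `&` [set w | q w <= x]) =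
       (P (A `&` [set w | ~~ yb w]) * x%:E + P (A `&` [set w | yb w]) * (G x)%:E)%E) ->
  forall A x z, Sg A -> 0 <= x <= 1 -> x <= z ->
  Pr P (A `&` ([set w | x < q w] `&` [set w | q w <= z])) <= L * Pr P A * (z - x).
Proof.
move=> my mq SgM SgT G1 L1 GL Hc A x z SA /andP[x0 x1] xz.
have my' : measurable [set w | ~~ yb w].
  rewrite (_ : [set w | ~~ yb w] = ~` [set w | yb w]); first exact: measurableC.
  by apply/seteqP; split=> w /=; case: (yb w).
have mA := SgM _ SA.
have mc : forall c : R, measurable_fun setT (fun _ : Omega => c) by move=> c; exact: measurable_cst.
have mle_ c : measurable [set w | q w <= c] by exact: (mle _ _ mq (mc c)).
have mlt_ c : measurable [set w | c < q w] by exact: (mlt _ _ (mc c) mq).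
have Hr : forall B, Sg B -> forall u, 0 <= u <= 1 ->
   Pr P (B `&` [set w | q w <= u]) =
   Pr P (B `&` [set w | ~~ yb w]) * u + Pr P (B `&` [set w | yb w]) * G u.
  move=> B SB u u01; apply: EFin_inj; rewrite EFinD !EFinM -!PrE; first exact: Hc.
  - exact: measurableI (SgM _ SB) my.
  - exact: measurableI (SgM _ SB) my'.
  - exact: measurableI (SgM _ SB) (mle_ u).
pose z' := Num.min z 1.
have xz' : x <= z' by rewrite le_min xz x1.
have z'1 : z' <= 1 by rewrite ge_min lexx orbT.
have z'0 : 0 <= z' by exact: le_trans x0 xz'.
have p1 : Pr P [set w | 1 < q w] = 0.
  have h := Hr _ SgT 1 ltac:(by rewrite ler01 lexx).
  rewrite G1 !mulr1 Pr_split // Pr_T in h.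
  have h2 : Pr P (setT `&` [set w | q w <= 1]) + Pr P [set w | 1 < q w] = 1.
    rewrite -Pr_disj; [|exact: measurableI|exact: mlt_|].
      rewrite -[RHS](Pr_T _ _ _ P); congr Pr; apply/seteqP; split=> w //= _.
      by case: (leP (q w) 1) => h'; [left|right].
    by apply/seteqP; split=> w //= [][] _ /le_lt_trans h' /h'; rewrite ltxx.
  by rewrite h in h2; lra.
have step1 : Pr P (A `&` ([set w | x < q w] `&` [set w | q w <= z])) <=
   Pr P (A `&` ([set w | x < q w] `&` [set w | q w <= z'])) + Pr P [set w | 1 < q w].
  have mX : measurable (A `&` ([set w | x < q w] `&` [set w | q w <= z'])).
    by apply: measurableI => //; apply: measurableI.
  apply: (le_trans _ (Pr_U _ _ _ P _ _ mX (mlt_ 1))).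
  apply: Pr_le; [by apply: measurableI => //; apply: measurableI|exact: measurableU|].
  move=> w /= [Aw [xw wz]]; case: (leP (q w) 1) => h'; [left|by right].
  by split=> //; split=> //; rewrite le_min wz h'.
have step2 : Pr P (A `&` [set w | q w <= z']) =
    Pr P (A `&` [set w | q w <= x]) + Pr P (A `&` ([set w | x < q w] `&` [set w | q w <= z'])).
  rewrite -Pr_disj; [|exact: measurableI|do 2 apply: measurableI => //|].
    congr Pr; apply/seteqP; split=> w /=.
      by case=> Aw wz; case: (leP (q w) x) => h'; [left|right].
    by case=> [][Aw h']; split=> //; [exact: le_trans h' xz'|case: h'].
  by apply/seteqP; split=> w //= [][] _ /le_lt_trans h' [] _ [] /h'; rewrite ltxx.
have e1 := Hr A SA x ltac:(by rewrite x0 x1).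
have e2 := Hr A SA z' ltac:(by rewrite z'0 z'1).
rewrite e1 e2 in step2.
have hG : G z' - G x <= L * (z' - x).
  have := GL z' x ltac:(by rewrite z'0 z'1) ltac:(by rewrite x0 x1).
  rewrite (@ger0_norm _ (z' - x)) ?subr_ge0 // => h.
  exact: le_trans (ler_norm _) h.
have hs := Pr_split P A yb mA my.
have a0 : 0 <= Pr P (A `&` [set w | ~~ yb w]) by apply: Pr_ge0; exact: measurableI.
have b0 : 0 <= Pr P (A `&` [set w | yb w]) by apply: Pr_ge0; exact: measurableI.
have zz : z' - x <= z - x by rewrite lerD2r ge_min lexx.
set a := Pr P (A `&` [set w | ~~ yb w]) in step2 hs a0.
set b := Pr P (A `&` [set w | yb w]) in step2 hs b0.
have h1 : b * (G z' - G x) <= b * (L * (z' - x)) by apply: ler_wpM2l.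
have h2 : 0 <= (L - 1) * a * (z' - x).
  by apply: mulr_ge0; [apply: mulr_ge0 => //; rewrite subr_ge0|rewrite subr_ge0].
have h3 : L * Pr P A * (z' - x) <= L * Pr P A * (z - x).
  by apply: ler_wpM2l => //; apply: mulr_ge0; [lra|rewrite -hs; lra].
rewrite -hs in h3.
rewrite -hs; lra.
Qed.

Lemma Pr_bigU {R : realType} {d : measure_display} {Omega : measurableType d}
  (P : probability Omega R) (F : nat -> set Omega) (n : nat) :
  (forall i, measurable (F i)) -> trivIset setT F ->
  Pr P (\big[setU/set0]_(i < n) F i) = \sum_(i < n) Pr P (F i).
Proof.
move=> mF tF; apply: EFin_inj; rewrite -sumEFin -PrE; last first.
  by apply: bigsetU_measurable => i _; exact: mF.
rewrite measure_bigsetU //; apply: eq_bigr => i _; exact: PrE.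
Qed.

Lemma slot_uniq {R : realType} (N k j : nat) (v : R) : (0 < N)%N ->
  k%:R / N%:R <= v < k.+1%:R / N%:R -> j%:R / N%:R <= v < j.+1%:R / N%:R -> k = j.
Proof.
move=> N0; have N0' : 0 < N%:R :> R by rewrite ltr0n.
rewrite !ler_pdivrMr // !ltr_pdivlMr // => /andP[h1 h2] /andP[h3 h4].
have a1 : k%:R < j.+1%:R :> R by exact: le_lt_trans h1 h4.
have a2 : j%:R < k.+1%:R :> R by exact: le_lt_trans h3 h2.
rewrite ltr_nat ltnS in a1; rewrite ltr_nat ltnS in a2.
by apply/eqP; rewrite eqn_leq a1 a2.
Qed.



Lemma part_bound {R : realType} {d : measure_display} {Omega : measurableType d}
  (P : probability Omega R) (yb : Omega -> bool) (q : Omega -> R) (G : R -> R) (L : R)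
  (Sg : set (set Omega)) (lbt : Omega -> R) (e : R) (N : nat) :
  measurable [set w | yb w] -> measurable_fun setT q -> Sg `<=` measurable -> Sg setT ->
  G 1 = 1 -> 1 <= L ->
  (forall x y, 0 <= x <= 1 -> 0 <= y <= 1 -> `|G x - G y| <= L * `|x - y|) ->
  (forall A, Sg A -> forall x, 0 <= x <= 1 ->
     P (A `&` [set w | q w <= x]) =
       (P (A `&` [set w | ~~ yb w]) * x%:E + P (A `&` [set w | yb w]) * (G x)%:E)%E) ->
  (forall w, 0 <= lbt w <= 1) -> (forall B, measurable B -> Sg (lbt @^-1` B)) ->
  0 <= e -> (0 < N)%N ->
  Pr P ([set w | lbt w < q w] `&` [set w | q w <= lbt w + e]) <= L * (N%:R^-1 + e).
Proof.
move=> my mq SgM SgT G1 L1 GL Hc lb01 Hlb e0 N0.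
have N0' : 0 < N%:R :> R by rewrite ltr0n.
have mlb : measurable_fun setT lbt.
  by move=> _ B mB; rewrite setTI; apply: SgM; exact: Hlb.
have mc : forall c : R, measurable_fun setT (fun _ : Omega => c) by move=> c; exact: measurable_cst.
have mle_ c : measurable [set w | q w <= c] by exact: (mle _ _ mq (mc c)).
have mlt_ c : measurable [set w | c < q w] by exact: (mlt _ _ (mc c) mq).
pose I k : set R := [set` `[k%:R / N%:R, k.+1%:R / N%:R[%R].
pose A k := lbt @^-1` I k.
pose F k := A k `&` ([set w | k%:R / N%:R < q w] `&` [set w | q w <= k.+1%:R / N%:R + e]).
have mA k : measurable (A k) by apply: SgM; apply: Hlb; exact: measurable_itv.
have mF k : measurable (F k) by apply: measurableI => //; apply: measurableI.
have tA : trivIset setT A.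
  move=> i j _ _ [w [hi hj]].
  move: hi hj; rewrite /A /I /preimage /= !in_itv /=.
  exact: (@slot_uniq _ N i j (lbt w) N0).
have tF : trivIset setT F.
  by move=> i j _ _ [w [[hi _] [hj _]]]; apply: tA => //; exists w.
have mE : measurable ([set w | lbt w < q w] `&` [set w | q w <= lbt w + e]).
  apply: measurableI; first exact: mlt _ _ mlb mq.
  exact: (mle q (fun w => lbt w + e) mq (measurable_funD mlb (mc e))).
have cover : [set w | lbt w < q w] `&` [set w | q w <= lbt w + e] `<=` \big[setU/set0]_(k < N.+1) F k.
  move=> w [/= h1 h2]; rewrite -bigcup_mkord.
  have /andP[l0 l1] := lb01 w.
  pose k := Num.truncn (lbt w * N%:R).
  have kN : (k < N.+1)%N.
    rewrite ltnS /k truncn_le_nat; apply: le_lt_trans (_ : N%:R < N.+1%:R) ; last by rewrite ltr_nat.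
    by rewrite -[leRHS]mul1r ler_wpM2r // ltW.
  have k1 : k%:R / N%:R <= lbt w.
    by rewrite ler_pdivrMr // truncn_le; apply: mulr_ge0 => //; exact: ltW.
  have k2 : lbt w < k.+1%:R / N%:R by rewrite ltr_pdivlMr // truncnS_gt.
  exists k => //=; split; first by rewrite /A /I /= in_itv /= k1 k2.
  by split; [exact: le_lt_trans k1 h1| apply: le_trans h2 _; rewrite lerD2r ltW].
apply: le_trans (Pr_le _ _ _ P _ _ mE _ cover) _.
  by apply: bigsetU_measurable => k _; exact: mF.
rewrite Pr_bigU //.
have hk : forall k : 'I_N.+1, Pr P (F k) <= L * (N%:R^-1 + e) * Pr P (A k).
  move=> k.
  have k0 : 0 <= k%:R / N%:R :> R by apply: divr_ge0; apply: ler0n.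
  have k1 : k%:R / N%:R <= 1 :> R.
    by rewrite ler_pdivrMr // mul1r ler_nat -ltnS.
  have hz : k%:R / N%:R <= k.+1%:R / N%:R + e.
    by apply: le_trans (_ : k.+1%:R / N%:R <= _); [rewrite ler_pM2r ?invr_gt0 // ler_nat|rewrite lerDl].
  have := cdf_int P yb q G L Sg my mq SgM SgT G1 L1 GL Hc (A k) (k%:R / N%:R) (k.+1%:R / N%:R + e) (Hlb _ (measurable_itv _)) ltac:(by rewrite k0 k1) hz.
  have -> : k.+1%:R / N%:R + e - k%:R / N%:R = N%:R^-1 + e.
    by rewrite -addn1 natrD mulrDl mul1r; lra.
  by rewrite mulrAC.
apply: le_trans (ler_sum _ (fun k _ => hk k)) _.
rewrite -mulr_sumr -Pr_bigU //.
rewrite -[leRHS]mulr1; apply: ler_wpM2l.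
  by apply: mulr_ge0; [lra|apply: addr_ge0 => //; rewrite invr_ge0 ler0n].
by apply: Pr_le1; apply: bigsetU_measurable.
Qed.



Lemma mem_bset {T : Type} (f : T -> bool) w : (w \in [set x | f x]) = f w.
Proof. by apply/idP/idP => /[!inE]. Qed.

Lemma mand {d : measure_display} {Omega : measurableType d} (f g : Omega -> bool) :
  measurable [set w | f w] -> measurable [set w | g w] -> measurable [set w | f w && g w].
Proof.
move=> mf mg; rewrite (_ : [set w | f w && g w] = [set w | f w] `&` [set w | g w]).
  exact: measurableI.
by apply/seteqP; split=> w /=; [move/andP|move=> [-> ->]].
Qed.

Lemma mneg {d : measure_display} {Omega : measurableType d} (f : Omega -> bool) :
  measurable [set w | f w] -> measurable [set w | ~~ f w].
Proof.
move=> mf; rewrite (_ : [set w | ~~ f w] = ~` [set w | f w]); first exact: measurableC.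
by apply/seteqP; split=> w /=; case: (f w).
Qed.

Lemma sum_isqrt {R : realType} (T : nat) :
  \sum_(1 <= t < T.+1) (Num.sqrt (t%:R : R))^-1 <= 2 * Num.sqrt (T%:R : R).
Proof.
elim: T => [|T IH]; first by rewrite big_geq // sqrtr0 mulr0.
rewrite big_nat_recr //=.
set s := Num.sqrt (T%:R : R); set u := Num.sqrt (T.+1%:R : R).
have s0 : 0 <= s by exact: sqrtr_ge0.
have u0 : 0 < u by rewrite sqrtr_gt0 ltr0n.
have hs : s ^+ 2 = T%:R by rewrite sqr_sqrtr // ler0n.
have hu : u ^+ 2 = T%:R + 1 by rewrite sqr_sqrtr ?ler0n // -natr1.
have hq : 0 <= (u - s) ^+ 2 := sqr_ge0 _.
have e : 2 * (u - s) * u - 1 = (u - s) ^+ 2 + (u ^+ 2 - s ^+ 2 - 1) by ring.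
have h1 : 1 <= 2 * (u - s) * u by rewrite hs hu in e; lra.
have h2 : u^-1 <= 2 * (u - s) by rewrite -[u^-1]mul1r ler_pdivrMr.
apply: le_trans (lerD IH (lexx _)) _; rewrite -/s; lra.
Qed.

Lemma Regret_sum {R : realType} {d : measure_display} {Omega : measurableType d}
  (a b : R) (Y dd : nat -> Omega -> bool) (T : nat) :
  Regret a b Y dd T = fun w => \sum_(1 <= t < T.+1)
    (a * \1_([set w | ~~ Y t w && dd t w]) w + b * \1_([set w | Y t w && ~~ dd t w]) w).
Proof.
apply: funext => w; rewrite /Regret /Vcount /Mcount !mulr_sumr -big_split /=.
by apply: eq_bigr => t _; rewrite !indicE !mem_bset.
Qed.

Lemma Z_cdf {R : realType} {d : measure_display} {Omega : measurableType d}
  (P : probability Omega R) (Y : nat -> Omega -> bool) (p Z : nat -> Omega -> R) :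
  (forall A, <<s all_Yp_gen Y p >> A ->
     forall (s : seq nat) (x : nat -> R), uniq s -> all (fun i => 0 < i)%N s ->
     (forall i, 0 <= x i <= 1) ->
     P (A `&` \bigcap_(i in [set` s]) [set w | Z i w <= x i]) =
       (P A * \prod_(i <- s) (x i)%:E)%E) ->
  forall t c, (0 < t)%N -> 0 <= c <= 1 -> P [set w | Z t w <= c] = c%:E.
Proof.
move=> HZ t c t0 c01.
have ST : <<s all_Yp_gen Y p >> setT.
  have [h0 hC _] := smallest_sigma_algebra setT (all_Yp_gen Y p).
  by have := hC _ h0; rewrite setD0.
have := HZ _ ST [:: t] (fun _ => c) isT ltac:(by rewrite /= t0) (fun _ => c01).
rewrite setTI probability_setT mul1e big_seq1 => <-.
congr (P _); apply/seteqP; split=> w /=.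
  by move=> h i /=; rewrite mem_seq1 => /eqP ->.
by move=> h; apply: (h t) => /=; rewrite mem_seq1.
Qed.



Lemma term_bound {R : realType} (a b x1 y1 x2 y2 u v : R) : 0 <= a -> 0 <= b -> 0 <= u -> 0 <= v ->
  x1 <= y1 + u -> y1 <= x1 + v -> x2 <= y2 + v -> y2 <= x2 + u ->
  `|(a * x1 + b * x2) - (a * y1 + b * y2)| <= (a + b) * (u + v).
Proof.
move=> a0 b0 u0 v0 h1 h2 h3 h4.
have k1 : a * (x1 - y1) <= a * (u + v) by apply: ler_wpM2l => //; lra.
have k2 : a * (y1 - x1) <= a * (u + v) by apply: ler_wpM2l => //; lra.
have k3 : b * (x2 - y2) <= b * (u + v) by apply: ler_wpM2l => //; lra.
have k4 : b * (y2 - x2) <= b * (u + v) by apply: ler_wpM2l => //; lra.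
rewrite ler_norml; apply/andP; split; lra.
Qed.

Lemma Pr_subU {R : realType} {d : measure_display} {Omega : measurableType d}
  (P : probability Omega R) (S S1 S2 : set Omega) :
  measurable S -> measurable S1 -> measurable S2 -> S `<=` S1 `|` S2 ->
  Pr P S <= Pr P S1 + Pr P S2.
Proof.
move=> mS m1 m2 h; apply: le_trans (Pr_U _ _ _ P _ _ m1 m2).
by apply: Pr_le => //; exact: measurableU.
Qed.

Theorem corollary2 (R : realType) (d : measure_display) (Omega : measurableType d)
  (P : probability Omega R)
  (Y : nat -> Omega -> bool) (p : nat -> {RV P >-> R}) (Z : nat -> {RV P >-> R})
  (G : R -> R) (L : R) (lb : nat -> Omega -> R) (eta kappa alpha a b : R) :
  (forall t, measurable [set w | Y t w]) ->
  {within [set x : R | 0 <= x <= 1], continuous G} ->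
  (forall x y, 0 <= x -> x < y -> y <= 1 -> G x < G y) ->
  G 0 = 0 -> G 1 = 1 -> 1 <= L ->
  (forall x y, 0 <= x <= 1 -> 0 <= y <= 1 -> `|G x - G y| <= L * `|x - y|) ->
  (forall t, (1 <= t)%N -> forall A, <<s states_past_gen Y (fun s => p s) t >> A ->
     forall x, 0 <= x <= 1 ->
     P (A `&` [set w | p t w <= x]) =
       (P (A `&` [set w | ~~ Y t w]) * x%:E + P (A `&` [set w | Y t w]) * (G x)%:E)%E) ->
  (forall A, <<s all_Yp_gen Y (fun s => p s) >> A ->
     forall (s : seq nat) (x : nat -> R), uniq s -> all (fun i => 0 < i)%N s ->
     (forall i, 0 <= x i <= 1) ->
     P (A `&` \bigcap_(i in [set` s]) [set w | Z i w <= x i]) =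
       (P A * \prod_(i <- s) (x i)%:E)%E) ->
  (forall t w, 0 <= lb t w <= 1) ->
  (forall t (B : set R), measurable B -> <<s past_p_gen (fun s => p s) t >> (lb t @^-1` B)) ->
  0 < eta ->
  {ae P, forall w, eta <= limn_inf (fun T : nat =>
     Rcount (decB (fun s => p s) lb) T w / T%:R)} ->
  0 <= kappa -> 0 < alpha < 1 -> 0 < a -> 0 < b ->
  (exists c T0, 0 < c /\ forall T, (T0 <= T)%N ->
     c * T%:R <= Expect P (Regret a b Y (decB (fun s => p s) lb) T)) ->
  (exists C T0, forall T, (T0 <= T)%N ->
     `|Expect P (Regret a b Y (decD kappa alpha (fun s => p s) lb (fun s => Z s)) T)
       - Expect P (Regret a b Y (decB (fun s => p s) lb) T)| <= C * Num.sqrt T%:R) /\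
  (exists c1 c2 T0, 0 < c1 /\ 0 < c2 /\ forall T, (T0 <= T)%N ->
     c1 * T%:R <= Expect P (Regret a b Y (decD kappa alpha (fun s => p s) lb (fun s => Z s)) T)
     <= c2 * T%:R).
Proof.
move=> mY Gc Gmono G0 G1 L1 GL Hcdf HZ lb01 Hlb eta0 Hae kappa0 /andP[al0 al1] a0 b0
  [c [T0 [c0 HB]]].
pose pp := fun s => (p s : Omega -> R).
pose ZZ := fun s => (Z s : Omega -> R).
have mp : forall s, measurable_fun setT (pp s) by move=> s; exact: measurable_funPT.
have mZ : forall s, measurable_fun setT (ZZ s) by move=> s; exact: measurable_funPT.
have mc : forall c : R, measurable_fun setT (fun _ : Omega => c) by move=> c'; exact: measurable_cst.
pose Sg t := <<s states_past_gen Y pp t >>.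
have SgM t : Sg t `<=` measurable.
  apply: smallest_sub; first exact: sigma_algebra_measurable.
  move=> A [[s [_ ->]]|[s [B [_ [mB ->]]]]]; first exact: mY.
  by have := mp s measurableT B mB; rewrite setTI.
have SgT t : Sg t setT.
  have [h0 hC _] := smallest_sigma_algebra setT (states_past_gen Y pp t).
  by have := hC _ h0; rewrite setD0.
have Hlb' t B : measurable B -> Sg t (lb t @^-1` B).
  move=> mB; apply: (sub_sigma_algebra2 _ (Hlb t B mB)).
  by move=> A hA; right.
have mlb t : measurable_fun setT (lb t).
  by move=> _ B mB; rewrite setTI; apply: SgM; exact: Hlb'.
pose ep t := eps kappa alpha t.
have ep0 t : 0 <= ep t.
  by rewrite /ep /eps; apply: divr_ge0; [apply: mulr_ge0 => //; exact: ltW|exact: sqrtr_ge0].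
pose DB t := [set w | decB pp lb t w].
pose DD t := [set w | decD kappa alpha pp lb ZZ t w].
have mDB t : measurable (DB t) by exact: (mle _ _ (mp t) (mlb t)).
have mDD t : measurable (DD t).
  rewrite (_ : DD t = [set w | pp t w <= 1] `&` [set w | pp t w <= lb t w + ep t * ZZ t w]).
    apply: measurableI; first exact: (mle _ _ (mp t) (mc 1)).
    apply: (mle _ (fun w => lb t w + ep t * ZZ t w) (mp t)).
    apply: measurable_funD => //; exact: measurable_funM.
  by apply/seteqP; split=> w; rewrite /DD /decD /lamD /= le_min => /andP.
have Zc t x : (0 < t)%N -> 0 <= x <= 1 -> Pr P [set w | ZZ t w <= x] = x.
  by move=> t0 x01; rewrite /Pr (Z_cdf P Y pp ZZ HZ t x t0 x01).
have mZle t x : measurable [set w | ZZ t w <= x] by exact: (mle _ _ (mZ t) (mc x)).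
have mZlt t x : measurable [set w | x < ZZ t w] by exact: (mlt _ _ (mc x) (mZ t)).
have Zneg t : (0 < t)%N -> Pr P [set w | ZZ t w < 0] = 0.
  move=> t0; apply/eqP; rewrite eq_le; apply/andP; split; last first.
    by apply: Pr_ge0; exact: (mlt _ _ (mZ t) (mc 0)).
  rewrite -[leRHS](Zc t 0 t0 ltac:(by rewrite lexx ler01)).
  apply: Pr_le; [exact: (mlt _ _ (mZ t) (mc 0))|exact: mZle|by move=> w /= /ltW].
have Zbig t : (0 < t)%N -> Pr P [set w | 1 < ZZ t w] = 0.
  move=> t0; have h := Zc t 1 t0 ltac:(by rewrite lexx ler01).
  have h2 : Pr P [set w | ZZ t w <= 1] + Pr P [set w | 1 < ZZ t w] = 1.
    rewrite -Pr_disj //; last first.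
      by apply/seteqP; split=> w //= [] /le_lt_trans h' /h'; rewrite ltxx.
    rewrite -[RHS](Pr_T _ _ _ P); congr Pr; apply/seteqP; split=> w //= _.
    by case: (leP (ZZ t w) 1) => h'; [left|right].
  lra.
pose DnB t := [set w | decD kappa alpha pp lb ZZ t w && ~~ decB pp lb t w].
pose BnD t := [set w | decB pp lb t w && ~~ decD kappa alpha pp lb ZZ t w].
have mDnB t : measurable (DnB t).
  exact: (mand (decD kappa alpha pp lb ZZ t) (fun w => ~~ decB pp lb t w) (mDD t) (mneg _ (mDB t))).
have mBnD t : measurable (BnD t).
  exact: (mand (decB pp lb t) (fun w => ~~ decD kappa alpha pp lb ZZ t w) (mDB t) (mneg _ (mDD t))).
have hBnD t : (0 < t)%N -> Pr P (BnD t) = 0.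
  move=> t0; apply/eqP; rewrite eq_le Pr_ge0 // andbT -(Zneg t t0).
  apply: Pr_le => //; first exact: (mlt _ _ (mZ t) (mc 0)).
  move=> w; rewrite /BnD /decB /decD /lamD /= le_min negb_and => /andP[h1].
  have l1 := lb01 t w; have h1' : pp t w <= 1 by case/andP: l1 => _; exact: le_trans h1.
  rewrite h1' /= -ltNge => h2.
  case: (ltP (ZZ t w) 0) => // z0.
  have : 0 <= ep t * ZZ t w by apply: mulr_ge0.
  rewrite /ep; lra.
have mE t : measurable ([set w | lb t w < pp t w] `&` [set w | pp t w <= lb t w + ep t]).
  apply: measurableI; first exact: (mlt _ _ (mlb t) (mp t)).
  exact: (mle (pp t) (fun w => lb t w + ep t) (mp t) (measurable_funD (mlb t) (mc _))).
have hDnB t : (0 < t)%N -> Pr P (DnB t) <= L * (t%:R^-1 + ep t).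
  move=> t0.
  have := part_bound P (Y t) (pp t) G L (Sg t) (lb t) (ep t) t (mY t) (mp t) (SgM t) (SgT t)
    G1 L1 GL (Hcdf t t0) (lb01 t) (Hlb' t) (ep0 t) t0.
  move=> h; apply: le_trans h; rewrite -[leRHS]addr0 -(Zbig t t0).
  apply: Pr_subU => //.
  move=> w; rewrite /DnB /decB /decD /lamD /= le_min -ltNge => /andP[/andP[_ h2] h3].
  case: (leP (ZZ t w) 1) => z1; last by right.
  left; split => //=; apply: le_trans h2 _; rewrite lerD2l.
  by rewrite -[leRHS]mulr1; apply: ler_wpM2l.
have hq t : (0 < t)%N -> Pr P (DnB t) + Pr P (BnD t) <= L * (1 + kappa * alpha) * (Num.sqrt t%:R)^-1.
  move=> t0; rewrite hBnD // addr0; apply: le_trans (hDnB t t0) _.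
  set u := Num.sqrt (t%:R : R).
  have u1 : 1 <= u by rewrite -sqrtr1 ler_sqrt ?ler01 // ler1n.
  have u0 : 0 < u by lra.
  have hu : t%:R = u * u by rewrite -expr2 sqr_sqrtr // ler0n.
  have iu : 0 <= u^-1 <= 1 by rewrite invr_ge0 ltW //= invf_le1.
  have ht : t%:R^-1 <= u^-1 by rewrite hu invfM; nra.
  rewrite /ep /eps -/u -[leRHS]mulrA; apply: ler_wpM2l; first lra.
  by rewrite mulrDl mul1r; apply: lerD.
have S1m (dd : nat -> Omega -> bool) : (forall t, measurable [set w | dd t w]) ->
   forall t, measurable [set w | ~~ Y t w && dd t w].
  by move=> hd t; exact: (mand (fun w => ~~ Y t w) (dd t) (mneg _ (mY t)) (hd t)).
have S2m (dd : nat -> Omega -> bool) : (forall t, measurable [set w | dd t w]) ->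
   forall t, measurable [set w | Y t w && ~~ dd t w].
  by move=> hd t; exact: (mand (Y t) (fun w => ~~ dd t w) (mY t) (mneg _ (hd t))).
have EE (dd : nat -> Omega -> bool) (T : nat) : (forall t, measurable [set w | dd t w]) ->
  Expect P (Regret a b Y dd T) = \sum_(1 <= t < T.+1)
     (a * Pr P [set w | ~~ Y t w && dd t w] + b * Pr P [set w | Y t w && ~~ dd t w]).
  move=> hd; rewrite Regret_sum Expect_sum //; [exact: ltW|exact: ltW|exact: S1m|exact: S2m].
pose K := (a + b) * (L * (1 + kappa * alpha)).
have K0 : 0 <= K by apply: mulr_ge0; [lra|apply: mulr_ge0; [lra|]]; nra.
have conc1 T : `|Expect P (Regret a b Y (decD kappa alpha (fun s => p s) lb (fun s => Z s)) T)
       - Expect P (Regret a b Y (decB (fun s => p s) lb) T)| <= (2 * K) * Num.sqrt T%:R.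
  rewrite (EE (decD kappa alpha pp lb ZZ) T mDD) (EE (decB pp lb) T mDB) -sumrB.
  apply: le_trans (ler_norm_sum _ _ _) _.
  apply: le_trans (ler_sum_nat (G := fun t => K * (Num.sqrt t%:R)^-1) _) _.
    move=> t /andP[t1 _].
    have mS1 := S1m _ mDD t; have mS2 := S2m _ mDD t.
    have mS1' := S1m _ mDB t; have mS2' := S2m _ mDB t.
    apply: le_trans (@term_bound R a b _ _ _ _ (Pr P (DnB t)) (Pr P (BnD t)) (ltW a0) (ltW b0) (Pr_ge0 _ _ _ P _ (mDnB t)) (Pr_ge0 _ _ _ P _ (mBnD t))
      _ _ _ _) _.
    - apply: Pr_subU => // w; rewrite /DnB /BnD /=; case: (Y t w);
      case: (decD kappa alpha pp lb ZZ t w); case: (decB pp lb t w) => //= _; by [left|right].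
    - apply: Pr_subU => // w; rewrite /DnB /BnD /=; case: (Y t w);
      case: (decD kappa alpha pp lb ZZ t w); case: (decB pp lb t w) => //= _; by [left|right].
    - apply: Pr_subU => // w; rewrite /DnB /BnD /=; case: (Y t w);
      case: (decD kappa alpha pp lb ZZ t w); case: (decB pp lb t w) => //= _; by [left|right].
    - apply: Pr_subU => // w; rewrite /DnB /BnD /=; case: (Y t w);
      case: (decD kappa alpha pp lb ZZ t w); case: (decB pp lb t w) => //= _; by [left|right].
    rewrite /K -mulrA; apply: ler_wpM2l; first lra.
    exact: hq.
  rewrite -mulr_sumr.
  have h := ler_wpM2l K0 (sum_isqrt T); apply: le_trans h _.
  by rewrite le_eqVlt; apply/orP; left; apply/eqP; ring.
split; first by exists (2 * K), 0%N => T _; exact: conc1.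
pose X := 4 * K / c.
have X0 : 0 <= X by apply: divr_ge0; [lra|exact: ltW].
pose K1 := (Num.truncn (X ^+ 2)).+1.
exists (c / 2), (a + b), (maxn T0 K1); split; first lra.
split; first lra.
move=> T; rewrite geq_max => /andP[hT0 hK1].
have HBT := HB T hT0.
apply/andP; split.
  have := conc1 T; rewrite ler_norml => /andP[h1 h2].
  set s := Num.sqrt (T%:R : R) in h1 h2 *.
  have s0 : 0 <= s by exact: sqrtr_ge0.
  have hs : s ^+ 2 = T%:R by rewrite sqr_sqrtr // ler0n.
  have hX : X ^+ 2 < T%:R.
    apply: lt_le_trans (truncnS_gt _) _; rewrite ler_nat; exact: hK1.
  have sX : X <= s.
    case: (leP X s) => // sX; exfalso.
    have : s * s <= X * X by apply: ler_pM => //; exact: ltW.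
    rewrite !expr2 in hs hX; lra.
  have hcX : 4 * K <= c * s.
    by rewrite -ler_pdivrMl // mulrC; exact: sX.
  have hKs : 2 * K * s <= c / 2 * T%:R.
    rewrite -hs expr2; have : 0 <= s * (c * s - 4 * K) by apply: mulr_ge0; lra.
    lra.
  lra.
rewrite (EE _ T mDD).
apply: le_trans (ler_sum_nat (G := fun _ => a + b) _) _.
  move=> t _.
  have e1 := Pr_le1 _ _ _ P _ (S1m _ mDD t); have e2 := Pr_le1 _ _ _ P _ (S2m _ mDD t).
  have f1 : a * Pr P [set w | ~~ Y t w && decD kappa alpha pp lb ZZ t w] <= a * 1 by apply: ler_wpM2l => //; exact: ltW.
  have f2 : b * Pr P [set w | Y t w && ~~ decD kappa alpha pp lb ZZ t w] <= b * 1 by apply: ler_wpM2l => //; exact: ltW.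
  lra.
by rewrite sumr_const_nat subn1 /= mulr_natr.
Qed.
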